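(* Let $G$ be an Abelian group, $B=\{b_0,\dots,b_{q-1}\}\subseteq G$ a $B_h$ set of cardinality $q$, $b\in G$, and $n\ge1$. Then the code $$\mathcal C_n^{(G,B,b)}=\Big\{\mathbf x\in\triangle_n^{q-1}:\sum_{i=0}^{q-1}x_ib_i=b\Big\}$$ can correct $h$ deletions; in particular, if it has at least two elements then $d_1(\mathcal C_n^{(G,B,b)})>h$.
   Context: $\triangle_n^{q-1}=\{\mathbf x\in\mathbb Z^q:x_i\ge0,\sum_{i=0}^{q-1}x_i=n\}$, identified with multisets of cardinality $n$ over $[q]=\{0,\dots,q-1\}$ ($x_i$ = multiplicity of symbol $i$). $d_1(\mathbf x,\mathbf y)=\frac12\sum_i|x_i-y_i|$, $d_1(\mathcal C)$ its minimum over distinct codewords. A deletion removes one element of the multiset; a code can correct $h$ deletions if no two distinct codewords yield the same output after arbitrary patterns of at most $h$ deletions. $x_ib_i$ is the $x_i$-fold sum of $b_i$ in $G$. A set $\{b_0,\dots,b_{q-1}\}$ in an Abelian group is a $B_h$ set if the sums $b_{i_1}+\dots+b_{i_h}$, $0\le i_1\le\dots\le i_h\le q-1$, are pairwise different. *)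

(* Defs.v *)
From HB Require Import structures.
From mathcomp Require Import all_boot all_order all_algebra.
Set Implicit Arguments. Unset Strict Implicit. Unset Printing Implicit Defensive.
Import Order.TTheory GRing.Theory Num.Theory.

(* Multisets of cardinality n over [q] = {0,..,q-1}, as multiplicity vectors. *)
Definition simplex (q n : nat) (x : {ffun 'I_q -> nat}) : Prop :=
  (\sum_(i < q) x i)%N = n.

Definition wsum (G : zmodType) (q : nat) (b : 'I_q -> G) (x : {ffun 'I_q -> nat}) : G :=
  (\sum_(i < q) b i *+ x i)%R.

Definition Bh_set (G : zmodType) (q h : nat) (b : 'I_q -> G) : Prop :=
  forall s t : seq 'I_q,
    size s = h -> size t = h ->
    sorted (fun i j : 'I_q => (i <= j)%N) s ->
    sorted (fun i j : 'I_q => (i <= j)%N) t ->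
    (\sum_(i <- s) b i)%R = (\sum_(i <- t) b i)%R -> s = t.

Definition code (G : zmodType) (q : nat) (B : 'I_q -> G) (b : G) (n : nat)
  (x : {ffun 'I_q -> nat}) : Prop :=
  simplex n x /\ wsum B x = b.

Definition del1 (q : nat) (x y : {ffun 'I_q -> nat}) : Prop :=
  exists i : 'I_q, (0 < x i)%N /\
    y = [ffun j => if j == i then (x i).-1 else x j].

Fixpoint del_upto (q k : nat) (x y : {ffun 'I_q -> nat}) : Prop :=
  y = x \/ match k with
           | 0 => False
           | k'.+1 => exists z, del1 x z /\ del_upto k' z y
           end.

Definition corrects (q : nat) (C : {ffun 'I_q -> nat} -> Prop) (h : nat) : Prop :=
  forall x x' y, C x -> C x' -> x <> x' ->
    del_upto h x y -> del_upto h x' y -> False.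

Definition d1 (q : nat) (x y : {ffun 'I_q -> nat}) : rat :=
  ((\sum_(i < q) `|(x i)%:Z - (y i)%:Z|%N)%:R / 2)%R.

(* Main.v *)
Require Import Defs.
From HB Require Import structures.
From mathcomp Require Import all_boot all_order all_algebra.
From mathcomp Require Import zify.
Import Order.TTheory GRing.Theory Num.Theory.

Definition mkseq_ms {q : nat} (w : 'I_q -> nat) : seq 'I_q :=
  sort (fun i j : 'I_q => (i <= j)%N) (flatten [seq nseq (w j) j | j <- enum 'I_q]).

Lemma ms_perm {q : nat} (w : 'I_q -> nat) : perm_eq (mkseq_ms w) (flatten [seq nseq (w j) j | j <- enum 'I_q]).
Proof. by rewrite /mkseq_ms perm_sort. Qed.

Lemma ms_sorted {q : nat} (w : 'I_q -> nat) : sorted (fun i j : 'I_q => (i <= j)%N) (mkseq_ms w).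
Proof. apply: sort_sorted => i j; exact: leq_total. Qed.

Lemma ms_count {q : nat} (w : 'I_q -> nat) (i : 'I_q) : count_mem i (mkseq_ms w) = w i.
Proof.
rewrite (permP (ms_perm w)) count_flatten -map_comp sumnE big_map.
rewrite big_enum /= (bigD1 i) //= big1 /=.
  by rewrite count_nseq /= eqxx mul1n addn0.
by move=> j ji; rewrite count_nseq /= (negbTE ji).
Qed.

Lemma ms_size {q : nat} (w : 'I_q -> nat) : size (mkseq_ms w) = (\sum_i w i)%N.
Proof.
rewrite /mkseq_ms size_sort size_flatten /shape -map_comp sumnE big_map big_enum /=.
by apply: eq_bigr => j _; rewrite size_nseq.
Qed.

Lemma ms_sum {q : nat} (G : zmodType) (B : 'I_q -> G) w :
  (\sum_(i <- mkseq_ms w) B i = \sum_i B i *+ w i)%R.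
Proof.
rewrite (perm_big _ (ms_perm w)) big_flatten big_map big_enum /=.
apply: eq_bigr => j _; elim: (w j) => [|k IH]; first by rewrite big_nil.
by rewrite /= big_cons IH mulrS.
Qed.

Lemma sum_delta (G : zmodType) {q} (B : 'I_q -> G) i0 c :
  (\sum_i B i *+ ((i == i0) * c) = B i0 *+ c)%R.
Proof.
rewrite (bigD1 i0) //= big1 ?addr0 ?eqxx ?mul1n //.
by move=> j /negbTE ->; rewrite mul0n mulr0n.
Qed.

Lemma key (G : zmodType) {q h} {B : 'I_q -> G} {b n x x'} :
  Bh_set h B -> code B b n x -> code B b n x' -> x <> x' ->
  (h < \sum_i (x i - x' i))%N.
Proof.
move=> Bh [sx wx] [sx' wx'] nxx.
have sumuv : (\sum_i (x i - x' i) = \sum_i (x' i - x i))%N.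
  have e1 : (\sum_i x i = \sum_i minn (x i) (x' i) + \sum_i (x i - x' i))%N.
    by rewrite -big_split /=; apply: eq_bigr => i _; lia.
  have e2 : (\sum_i x' i = \sum_i minn (x i) (x' i) + \sum_i (x' i - x i))%N.
    by rewrite -big_split /=; apply: eq_bigr => i _; lia.
  move: sx sx'; rewrite /simplex e1 e2 => <- /eqP.
  by rewrite eqn_add2l => /eqP.
have wuv : (\sum_i B i *+ (x i - x' i) = \sum_i B i *+ (x' i - x i))%R.
  have e1 : (wsum B x = \sum_i B i *+ minn (x i) (x' i) + \sum_i B i *+ (x i - x' i))%R.
    rewrite /wsum -big_split /=; apply: eq_bigr => i _; rewrite -mulrnDr; congr (_ *+ _)%R; lia.
  have e2 : (wsum B x' = \sum_i B i *+ minn (x i) (x' i) + \sum_i B i *+ (x' i - x i))%R.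
    rewrite /wsum -big_split /=; apply: eq_bigr => i _; rewrite -mulrnDr; congr (_ *+ _)%R; lia.
  by apply: (@addrI _ (\sum_i B i *+ minn (x i) (x' i))%R); rewrite -e1 -e2 wx wx'.
rewrite ltnNge; apply/negP => hk.
case: (pickP (fun i => x i != x' i)) => [i0 _|allq]; last first.
  by apply: nxx; apply/ffunP => i; move: (allq i) => /negbFE /eqP.
set k := (\sum_i (x i - x' i))%N in hk sumuv.
pose wu i := (x i - x' i + (i == i0) * (h - k))%N.
pose wv i := (x' i - x i + (i == i0) * (h - k))%N.
have swu : (\sum_i wu i = h)%N.
  rewrite big_split /= -/k (bigD1 i0) //= big1 ?eqxx /=; first lia.
  by move=> j /negbTE ->.
have swv : (\sum_i wv i = h)%N.
  rewrite big_split /= -sumuv -/k (bigD1 i0) //= big1 ?eqxx /=; first lia.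
  by move=> j /negbTE ->.
have E := Bh (mkseq_ms wu) (mkseq_ms wv).
have {E} E : mkseq_ms wu = mkseq_ms wv.
  apply: E; rewrite ?ms_size ?swu ?swv ?ms_sorted //.
  rewrite !ms_sum /wu /wv.
  under eq_bigr do rewrite mulrnDr.
  under [in RHS]eq_bigr do rewrite mulrnDr.
  by rewrite !big_split /= !sum_delta wuv.
apply: nxx; apply/ffunP => i.
have := ms_count wu i; rewrite E ms_count /wu /wv => /eqP.
rewrite eqn_add2r => /eqP; move: (x i) (x' i) => a c; lia.
Qed.

Lemma del_le {q k} (x y : {ffun 'I_q -> nat}) :
  del_upto k x y -> (forall i, y i <= x i)%N /\ (\sum_i x i <= \sum_i y i + k)%N.
Proof.
elim: k x => [|k IH] x /=.
  by case=> // ->; split=> //; rewrite addn0.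
case=> [->|[z0 [[i [xi ->]] /IH [H1 H2]]]]; first by split=> //; rewrite leq_addr.
split.
  move=> j; apply: (leq_trans (H1 j)); rewrite ffunE; case: eqP => [->|_] //.
  exact: leq_pred.
set z := [ffun j => if j == i then (x i).-1 else x j] in H1 H2 *.
have Hz : (\sum_j x j = \sum_j z j + 1)%N.
  rewrite (bigD1 i) //= [in RHS](bigD1 i) //= /z ffunE eqxx.
  rewrite [in RHS](eq_bigr (fun j => x j)); last by move=> j /negbTE ji; rewrite ffunE ji.
  move: xi; set S := (\sum_(j < q | j != i) x j)%N; move: (x i) => a; lia.
rewrite Hz; move: H2; move: (\sum_j z j)%N (\sum_(i < q) y i)%N => a c; lia.
Qed.

Lemma d1E {q} (x y : {ffun 'I_q -> nat}) :
  (\sum_i (x i - y i) = \sum_i (y i - x i))%N ->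
  d1 x y = ((\sum_i (x i - y i))%N%:R : rat)%R.
Proof.
move=> e; rewrite /d1.
have -> : (\sum_(i < q) absz ((x i)%:Z - (y i)%:Z)%R = (\sum_i (x i - y i)) * 2)%N.
  rewrite muln2 -addnn {2}e -big_split /=; apply: eq_bigr => i _.
  case: (leqP (x i) (y i)) => hi.
    rewrite (distnEr hi). have/eqP -> : (x i - y i == 0)%N by rewrite subn_eq0.
    by rewrite add0n.
  rewrite (distnEl (ltnW hi)). have/eqP -> : (y i - x i == 0)%N by rewrite subn_eq0 ltnW.
  by rewrite addn0.
by rewrite GRing.natrM GRing.mulfK.
Qed.

Lemma sumuv_code {q} {x x' : {ffun 'I_q -> nat}} {n} :
  simplex n x -> simplex n x' ->
  (\sum_i (x i - x' i) = \sum_i (x' i - x i))%N.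
Proof.
move=> sx sx'.
  have e1 : (\sum_i x i = \sum_i minn (x i) (x' i) + \sum_i (x i - x' i))%N.
    by rewrite -big_split /=; apply: eq_bigr => i _; lia.
  have e2 : (\sum_i x' i = \sum_i minn (x i) (x' i) + \sum_i (x' i - x i))%N.
    by rewrite -big_split /=; apply: eq_bigr => i _; lia.
  move: sx sx'; rewrite /simplex e1 e2 => <- /eqP.
  by rewrite eqn_add2l => /eqP.
Qed.

Theorem mainTheorem13 (G : zmodType) (q h : nat) (B : 'I_q -> G) (b : G) (n : nat) :
  injective B -> Bh_set h B -> (1 <= n)%N ->
  corrects (code B b n) h /\
  (forall x y, code B b n x -> code B b n y -> x <> y ->
     (h%:R < d1 x y)%R).
Proof.
move=> _ Bh _; split.
  move=> x x' y cx cx' nxx /del_le [H1 H2] /del_le [H1' H2'].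
  have K := key _ Bh cx cx' nxx.
  have L : (\sum_i (x i - x' i) <= \sum_i (x i - y i))%N.
    apply: leq_sum => i _; have := H1' i; lia.
  have M : (\sum_i (x i - y i) + \sum_i y i = \sum_i x i)%N.
    by rewrite -big_split /=; apply: eq_bigr => i _; have := H1 i; lia.
  lia.
move=> x y cx cy nxy; rewrite d1E; last by case: cx; case: cy => s2 _ s1 _; exact: (sumuv_code s1 s2).
by rewrite ltr_nat; exact: (key _ Bh cx cy nxy).
Qed.
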